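(* For every $m\ge1$, the ideal $I^{(k,r)}_m\subset V$ is stable under $\mathcal H_n^{(k,r)}$, i.e. it is a subrepresentation of $V$. (One has $I^{(k,r)}_1=I^{(k,r)}\subset I^{(k,r)}_2\subset\cdots\subset I^{(k,r)}_{m_0+1}=V$ with $m_0=[\frac n{k+1}]$.)
   Context: Let $\tilde{\mathbb K}=\mathbb C(t^{1/2},q)$. The double affine Hecke algebra $\mathcal H_n$ of type $GL_n$ is the $\tilde{\mathbb K}$-algebra generated by $X_i^{\pm1},Y_i^{\pm1}$ ($1\le i\le n$), $T_j$ ($1\le j\le n-1$) with relations: $X$'s commute, $Y$'s commute; $(T_i-t^{1/2})(T_i+t^{-1/2})=0$; braid relations for the $T_i$; $T_iX_iT_i=X_{i+1}$; $T_iX_j=X_jT_i$ ($j\ne i,i+1$); $T_i^{-1}Y_iT_i^{-1}=Y_{i+1}$; $T_iY_j=Y_jT_i$ ($j\ne i,i+1$); $Y_2^{-1}X_1Y_2X_1^{-1}=T_1^2$; $Y_i\tilde X=q\tilde XY_i$ ($\tilde X=\prod X_i$); $X_i\tilde Y=q^{-1}\tilde YX_i$ ($\tilde Y=\prod Y_i$). It acts on $U=\tilde{\mathbb K}[x_1^{\pm1},\dots,x_n^{\pm1}]$ by $X_i\mapsto x_i$, $T_i\mapsto t^{1/2}s_i+\frac{t^{1/2}-t^{-1/2}}{x_i/x_{i+1}-1}(s_i-1)$, $Y_i\mapsto T_i\cdots T_{n-1}\omega T_1^{-1}\cdots T_{i-1}^{-1}$, with $s_i$ swapping $x_i,x_{i+1}$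 and $(\omega f)(x)=f(qx_n,x_1,\dots,x_{n-1})$. Fix $1\le k\le n-1$, $r\ge2$, $g=\gcd(k+1,r-1)$, $\tau=e^{2\pi\sqrt{-1}/(r-1)}$, specialization $(\ast)$: $t=u^{(r-1)/g}$, $q=\tau u^{-(k+1)/g}$. $\mathbb K$, $\mathcal H_n^{(k,r)}$, $V=\mathbb K[x_1^{\pm1},\dots,x_n^{\pm1}]$ are the images under $(\ast)$ of the elements of $\tilde{\mathbb K}$, $\mathcal H_n$, $U$ regular at $(\ast)$. $Z^{(k,r)}_m$ is the set of $z\in\mathbb K^n$ for which there exist pairwise distinct indices $i_{l,a}$ ($1\le l\le m$, $1\le a\le k+1$) and $s_{l,a}\in\mathbb Z_{\ge0}$ ($1\le a\le k$) with $z_{i_{l,a+1}}=z_{i_{l,a}}tq^{s_{l,a}}$, $\sum_{a=1}^ks_{l,a}\le r-2$ for each $l$, and $i_{l,a}<i_{l,a+1}$ whenever $s_{l,a}=0$; $I^{(k,r)}_m=\{f\in V:f(z)=0\ \forall z\in Z^{(k,r)}_m\}$, and $I^{(k,r)}=I^{(k,r)}_1$. *)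

(* Defs.v *)
From HB Require Import structures.
From Stdlib Require Import Reals.
From mathcomp Require Import all_boot all_order all_algebra.
From mathcomp Require Import fraction complex Rstruct.
Set Implicit Arguments. Unset Strict Implicit. Unset Printing Implicit Defensive.
Import Order.TTheory GRing.Theory Num.Theory.
Local Open Scope ring_scope.

Definition Cx : fieldType := (Rdefinitions.R)[i].

Definition tau (r : nat) : Cx :=
  Complex (cos (2 * PI / INR (r.-1))%R) (sin (2 * PI / INR (r.-1))%R).

(* The field K = C(w) of rational functions in one variable w
   (K is exactly C(w) with w = u^{1/2} or w = u). *)
Definition KK : fieldType := {fraction {poly Cx}}.
Definition tofr (p : {poly Cx}) : KK := @FracField.tofrac _ p.
Definition w : KK := tofr 'X.

Definition gg (k r : nat) : nat := gcdn k.+1 r.-1.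
Definition aa (k r : nat) : nat := (r.-1 %/ gg k r)%N.
Definition bb (k r : nat) : nat := (k.+1 %/ gg k r)%N.
(* exponents so that t^{1/2} = w ^+ cexp and q = tau * w ^- dexp *)
Definition cexp (k r : nat) : nat := if odd (aa k r) then aa k r else (aa k r)./2.
Definition dexp (k r : nat) : nat := if odd (aa k r) then (bb k r).*2 else bb k r.

Definition t12 (k r : nat) : KK := w ^+ cexp k r.
Definition tpar (k r : nat) : KK := t12 k r ^+ 2.
Definition qpar (k r : nat) : KK := tofr (tau r)%:P * w ^- dexp k r.

(* Points: z : nat -> KK, only the coordinates z 0, ..., z (n-1) matter
   (0-based indexing: z i stands for z_{i+1} of the paper). *)
Definition Pt := nat -> KK.

Definition torus (n : nat) (z : Pt) : Prop := forall i, (i < n)%N -> z i != 0.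

(* Elements of V = KK[x_1^{+-1},...,x_n^{+-1}], as functions on the torus
   (KK is infinite, so a Laurent polynomial is determined by these values). *)
Definition laurent (n : nat) (f : Pt -> KK) : Prop :=
  exists s : seq ((nat -> int) * KK),
    forall z, torus n z ->
      f z = \sum_(p <- s) p.2 * \prod_(i < n) (z i) ^ (p.1 i).

(* z \in Z^{(k,r)}_m (0-based indices: l < m, a <= k) *)
Definition inZ (n k r m : nat) (z : Pt) : Prop :=
  exists (idx s : nat -> nat -> nat),
    [/\ forall l a, (l < m)%N -> (a <= k)%N -> (idx l a < n)%N,
        forall l a l' a', (l < m)%N -> (a <= k)%N -> (l' < m)%N -> (a' <= k)%N ->
          idx l a = idx l' a' -> l = l' /\ a = a',
        forall l a, (l < m)%N -> (a < k)%N ->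
          z (idx l a.+1) = z (idx l a) * tpar k r * qpar k r ^+ s l a,
        forall l, (l < m)%N -> (\sum_(a < k) s l a <= r - 2)%N
      & forall l a, (l < m)%N -> (a < k)%N -> s l a = 0%N ->
          (idx l a < idx l a.+1)%N].

Definition Iid (n k r m : nat) (f : Pt -> KK) : Prop :=
  laurent n f /\ forall z, torus n z -> inZ n k r m z -> f z = 0.

Definition Xop (i : nat) (f : Pt -> KK) : Pt -> KK := fun z => z i * f z.
Definition Xinv (i : nat) (f : Pt -> KK) : Pt -> KK := fun z => (z i)^-1 * f z.

Definition swapz (i : nat) (z : Pt) : Pt :=
  fun j => if j == i then z i.+1 else if j == i.+1 then z i else z j.

Definition omz (n k r : nat) (z : Pt) : Pt :=
  fun j => if j == 0%N then qpar k r * z n.-1 else z j.-1.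
Definition Omega (n k r : nat) (f : Pt -> KK) : Pt -> KK := fun z => f (omz n k r z).

(* Tspec i f g : "g = T_i f" (T_i the Demazure-Lusztig operator, swapping
   x_i, x_{i+1} in 0-based indexing); the defining formula is imposed where
   it makes sense, i.e. off the hyperplane z_i = z_{i+1}, which determines the
   Laurent polynomial g uniquely. *)
Definition Tspec (n k r i : nat) (f g : Pt -> KK) : Prop :=
  forall z, torus n z -> z i != z i.+1 ->
    g z = t12 k r * f (swapz i z)
          + (t12 k r - (t12 k r)^-1) / (z i / z i.+1 - 1) * (f (swapz i z) - f z).

(* Yspec i f g : "g = Y_i f" with (0-based)
   Y_i = T_i T_{i+1} ... T_{n-2} omega T_0^{-1} ... T_{i-1}^{-1}
   (the paper's Y_{i+1} = T_{i+1} ... T_{n-1} omega T_1^{-1} ... T_i^{-1}). *)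
Definition Yspec (n k r i : nat) (f g : Pt -> KK) : Prop :=
  exists h h' : nat -> Pt -> KK,
    [/\ h 0%N = f,
        forall j, (j <= i)%N -> laurent n (h j)
      & forall j, (j < i)%N -> Tspec n k r (i.-1 - j)%N (h j.+1) (h j)] /\
    [/\ h' 0%N = Omega n k r (h i),
        forall j, (j <= n.-1 - i)%N -> laurent n (h' j),
        forall j, (j < n.-1 - i)%N -> Tspec n k r (n.-2 - j)%N (h' j) (h' j.+1)
      & g = h' (n.-1 - i)%N].

(* Main.v *)
Require Import Defs.
From HB Require Import structures.
From Stdlib Require Import Reals Lra Lia.
From mathcomp Require Import all_boot all_order all_algebra.
From mathcomp Require Import fraction complex Rstruct.
From mathcomp Require Import zify ring.
Set Implicit Arguments. Unset Strict Implicit. Unset Printing Implicit Defensive.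
Import Order.TTheory GRing.Theory Num.Theory.
Local Open Scope ring_scope.


Lemma tofr_inj (p q : {poly Cx}) : tofr p = tofr q -> p = q.
Proof. by move=> h; apply/eqP; rewrite -tofrac_eq; apply/eqP. Qed.

Lemma tofrM p q : tofr (p * q) = tofr p * tofr q.
Proof. exact: tofracM. Qed.
Lemma tofrX p n : tofr (p ^+ n) = tofr p ^+ n.
Proof. exact: tofracXn. Qed.
Lemma tofr1 : tofr 1 = 1.
Proof. exact: tofrac1. Qed.

Lemma w_neq0 : w != 0.
Proof. by rewrite /w /tofr tofrac_eq0 polyX_eq0. Qed.

Lemma w_pow_const (e : int) (c : Cx) : w ^ e * tofr c%:P = 1 -> e = 0.
Proof.
case: e => [n|n] /=.
  move=> h. have : 'X^n * c%:P = 1 :> {poly Cx}.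
    by apply: tofr_inj; rewrite tofrM tofrX tofr1.
  move/(congr1 (fun p : {poly Cx} => size p)).
  rewrite size_poly1.
  have [->|c0] := eqVneq c 0; first by rewrite mulr0 size_poly0.
  by rewrite mulrC mul_polyC size_scale // size_polyXn => -[->].
move=> h.
have hw : w ^+ n.+1 != 0 by rewrite expf_neq0 // w_neq0.
have : tofr c%:P = w ^+ n.+1.
  by move: h => /= /(congr1 (fun x => w ^+ n.+1 * x)); rewrite mulrA mulfV // mul1r mulr1.
rewrite -tofrX => /tofr_inj /(congr1 (fun p : {poly Cx} => size p)).
rewrite size_polyC size_polyXn; case: (c != 0) => //.
Qed.


Lemma cmulE (a b c d : R) : ((a +i* b) * (c +i* d) = (a*c - b*d) +i* (a*d + b*c))%C.
Proof. reflexivity. Qed.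

Local Open Scope R_scope.
Definition theta r := (2 * PI / INR (r.-1)).

Lemma tau_exp r b : GRing.exp (tau r) b = (cos (INR b * theta r) +i* sin (INR b * theta r))%C.
Proof.
elim: b => [|b IH].
  rewrite GRing.expr0 /= Rmult_0_l cos_0 sin_0; reflexivity.
rewrite GRing.exprSr IH /tau -/(theta r) cmulE S_INR Rmult_plus_distr_r Rmult_1_l.
rewrite cos_plus sin_plus RminusE !RmultE RplusE; congr (Complex _ _); exact: addrC.
Qed.

Lemma tau_r1 r : (2 <= r)%N -> GRing.exp (tau r) r.-1 = GRing.one _.
Proof.
move=> hr; rewrite tau_exp /theta.
have h : INR r.-1 <> 0 by apply: not_0_INR; case: r hr => [|[|]].
have -> : (INR r.-1 * (2 * PI / INR r.-1) = 2 * PI).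
  by unfold Rdiv; rewrite Rmult_comm Rmult_assoc Rinv_l // Rmult_1_r.
rewrite cos_2PI sin_2PI; reflexivity.
Qed.

Lemma tau_ne1 r b : (0 < b)%N -> (b < r.-1)%N -> GRing.exp (tau r) b != GRing.one _.
Proof.
move=> b0 br; rewrite tau_exp /theta; apply/negP => /eqP [hc hs].
have hr : (0 < INR r.-1) by apply: lt_0_INR; apply/ssrnat.ltP; exact: leq_ltn_trans br.
have hb0 : (0 < INR b) by apply: lt_0_INR; apply/ssrnat.ltP.
have hbr : (INR b < INR r.-1) by apply: lt_INR; apply/ssrnat.ltP.
have [z hz] := sin_eq_0_0 _ hs.
have pi0 := PI_RGT_0.
set x := (INR b * (2 * PI / INR r.-1)) in hz hc.
have x0 : (0 < x).
  rewrite /x; apply: Rmult_lt_0_compat => //; apply: Rdiv_lt_0_compat => //; lra.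
have x2 : (x < 2 * PI).
  rewrite /x /Rdiv -Rmult_assoc (Rmult_comm (INR b)) Rmult_assoc.
  rewrite -[X in (_ < X)]Rmult_1_r; apply: Rmult_lt_compat_l; first lra.
  apply: (Rmult_lt_reg_r (INR r.-1)) => //; rewrite Rmult_assoc Rinv_l; lra.
have z1 : z = Zpos xH.
  rewrite hz in x0 x2.
  have : (0 < IZR z) by nra.
  have : (IZR z < 2) by nra.
  move=> h1 h2.
  have e1 : Z.lt Z0 z by apply: lt_IZR.
  have e2 : Z.lt z (Zpos (xO xH)) by apply: lt_IZR.
  lia.
rewrite hz z1 Rmult_1_l cos_PI in hc; change (-1 = 1) in hc; lra.
Qed.

Local Close Scope R_scope.
Local Open Scope ring_scope.


Lemma aa_pos k r : (2 <= r)%N -> (0 < aa k r)%N.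
Proof.
move=> hr; have hr1 : (0 < r.-1)%N by case: r hr => [|[|]].
have hg : (0 < gg k r)%N by rewrite /gg gcdn_gt0.
rewrite /aa divn_gt0 //; apply: dvdn_leq => //; exact: dvdn_gcdr.
Qed.

Lemma cexp_pos k r : (2 <= r)%N -> (0 < cexp k r)%N.
Proof.
move=> hr; have := aa_pos k hr; rewrite /cexp.
case: ifP => // hodd; case: (aa k r) hodd => [|[|a]] //= ; lia.
Qed.

Lemma exp_rel k r : (2 * cexp k r * k.+1 = dexp k r * r.-1)%N.
Proof.
have key : (aa k r * k.+1 = bb k r * r.-1)%N.
  rewrite /aa /bb /gg.
  set g := gcdn k.+1 r.-1.
  have h1 : (g %| k.+1)%N by exact: dvdn_gcdl.
  have h2 : (g %| r.-1)%N by exact: dvdn_gcdr.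
  rewrite -{1}(divnK h1) -{2}(divnK h2); ring.
rewrite /cexp /dexp; case: ifP => ho.
  lia.
have : ((aa k r)./2 .*2 = aa k r)%N by rewrite -[RHS](odd_double_half (aa k r)) ho.
lia.
Qed.

Lemma t12_neq0 k r : t12 k r != 0.
Proof. by rewrite /t12 expf_neq0 // w_neq0. Qed.

Lemma qpar_neq0 k r : (2 <= r)%N -> qpar k r != 0.
Proof.
move=> hr.
rewrite /qpar mulf_neq0 //; last by rewrite invr_neq0 // expf_neq0 // w_neq0.
rewrite /tofr tofrac_eq0 polyC_eq0.
apply/eqP => h; have := tau_r1 hr; rewrite h expr0n.
have -> : (r.-1 == 0%N) = false by case: r hr h => [|[|]].
by move/eqP; rewrite eq_sym oner_eq0.
Qed.

Lemma tq_pow k r d b : tpar k r ^+ d * qpar k r ^+ b =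
  w ^ ((2 * cexp k r * d)%N%:Z - (dexp k r * b)%N%:Z) * tofr (tau r ^+ b)%:P.
Proof.
have ht : tpar k r ^+ d = w ^+ (2 * cexp k r * d).
  by rewrite /tpar /t12 -!exprM; congr (_ ^+ _); lia.
have hq : qpar k r ^+ b = tofr (tau r ^+ b)%:P / w ^+ (dexp k r * b).
  by rewrite /qpar exprMn rmorphXn tofrX exprVn -exprM.
rewrite ht hq expfzDr ?w_neq0 // -exprnN.
change (w ^ (2 * cexp k r * d)%N) with (w ^+ (2 * cexp k r * d)).
by rewrite mulrA mulrAC.
Qed.

Lemma tq_ne1 k r d b : (2 <= r)%N -> (0 < d)%N -> (b <= r - 2)%N ->
  tpar k r ^+ d * qpar k r ^+ b != 1.
Proof.
move=> hr hd hb; rewrite tq_pow; apply/negP => /eqP h.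
have he := w_pow_const h.
move: h; rewrite he expr0z mul1r -tofr1 => /tofr_inj /polyC_inj.
have hc := cexp_pos k hr.
case: b hb he => [|b] hb he.
  exfalso; move: he; rewrite muln0 subr0 => -[]; lia.
apply/eqP; apply: tau_ne1 => //; lia.
Qed.

Lemma tq_rel k r : (2 <= r)%N -> tpar k r ^+ k.+1 * qpar k r ^+ r.-1 = 1.
Proof.
move=> hr; rewrite tq_pow exp_rel subrr expr0z mul1r tau_r1 // tofr1.
Qed.


Lemma laurent_ext n f z z' : laurent n f -> torus n z -> torus n z' ->
  (forall j, (j < n)%N -> z j = z' j) -> f z = f z'.
Proof.
move=> [s hs] tz tz' he; rewrite (hs _ tz) (hs _ tz').
apply: eq_bigr => p _; congr (_ * _); apply: eq_bigr => j _; by rewrite he.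
Qed.

Lemma inZ_ext n k r m z z' : inZ n k r m z ->
  (forall j, (j < n)%N -> z j = z' j) -> inZ n k r m z'.
Proof.
move=> [idx [s [h1 h2 h3 h4 h5]]] he; exists idx, s; split => //.
move=> l a hl ha; rewrite -!he; [exact: h3| apply: h1 => //; exact: ltnW | apply: h1 => //].
Qed.

Lemma prod_shift n (z : Pt) (e : nat -> int) i c : (i < n)%N -> torus n z ->
  \prod_(j < n) z j ^ (e j + (if j == i :> nat then c else 0)) = z i ^ c * \prod_(j < n) z j ^ e j.
Proof.
move=> hi tz.
rewrite (eq_bigr (fun j : 'I_n => z j ^ e j * z j ^ (if j == i :> nat then c else 0))); last first.
  by move=> j _; rewrite expfzDr // tz.
rewrite big_split /= mulrC; congr (_ * _).
rewrite (bigD1 (Ordinal hi)) //= eqxx big1 ?mulr1 // => j hj.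
by rewrite ifF ?expr0z //; apply: contraNF hj => /eqP h; apply/eqP/val_inj.
Qed.

Lemma laurent_shift n f i c : (i < n)%N -> laurent n f ->
  laurent n (fun z => z i ^ c * f z).
Proof.
move=> hi [s hs]; exists [seq ((fun j => p.1 j + (if j == i then c else 0)), p.2) | p <- s].
move=> z tz; rewrite hs // big_map big_distrr /=; apply: eq_bigr => p _.
by rewrite prod_shift // mulrCA.
Qed.

Lemma laurent_Xop n i f : (i < n)%N -> laurent n f -> laurent n (Xop i f).
Proof.
move=> hi hf; have [s hs] := laurent_shift 1 hi hf; exists s => z tz.
by rewrite -hs // /Xop expr1z.
Qed.

Lemma laurent_Xinv n i f : (i < n)%N -> laurent n f -> laurent n (Xinv i f).
Proof.
move=> hi hf; have [s hs] := laurent_shift (-1) hi hf; exists s => z tz.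
by rewrite -hs // /Xinv exprN1.
Qed.

Lemma Iid_Xop n k r m i f : (i < n)%N -> Iid n k r m f -> Iid n k r m (Xop i f).
Proof.
by move=> hi [hl hz]; split; [exact: laurent_Xop | move=> z tz hZ; rewrite /Xop hz // mulr0].
Qed.

Lemma Iid_Xinv n k r m i f : (i < n)%N -> Iid n k r m f -> Iid n k r m (Xinv i f).
Proof.
by move=> hi [hl hz]; split; [exact: laurent_Xinv | move=> z tz hZ; rewrite /Xinv hz // mulr0].
Qed.

Lemma inZ_mono n k r m z : inZ n k r m.+1 z -> inZ n k r m z.
Proof.
move=> [idx [s [h1 h2 h3 h4 h5]]]; exists idx, s; split.
- by move=> l a hl; apply: h1; apply: ltnW.
- by move=> l a l' a' hl ha hl' ha'; apply: h2 => //; apply: ltnW.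
- by move=> l a hl; apply: h3; apply: ltnW.
- by move=> l hl; apply: h4; apply: ltnW.
- by move=> l a hl; apply: h5; apply: ltnW.
Qed.

Lemma inZ_empty n k r z : inZ n k r (n %/ k.+1).+1 z -> False.
Proof.
move=> [idx [s [h1 h2 _ _ _]]].
set m := (n %/ k.+1).+1.
pose F (p : 'I_m * 'I_k.+1) : 'I_n := Ordinal (h1 p.1 p.2 (ltn_ord p.1) (ltn_ord p.2)).
have inj : injective F.
  move=> [l a] [l' a'] /(congr1 val) /= h.
  have [e1 e2] := h2 _ _ _ _ (ltn_ord l) (ltn_ord a) (ltn_ord l') (ltn_ord a') h.
  by congr pair; apply: val_inj.
have := leq_card F inj; rewrite card_prod !card_ord.
have := ltn_ceil n (ltn0Sn k). rewrite /m; lia.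
Qed.


Definition sw (i j : nat) : nat := if j == i then i.+1 else if j == i.+1 then i else j.

Lemma swapz_sw i z j : swapz i z (sw i j) = z j.
Proof.
rewrite /swapz /sw; case: (eqVneq j i) => [->|h1]; first by rewrite eqn_leq ltnn /= eqxx.
case: (eqVneq j i.+1) => [->|h2]; first by rewrite eqxx.
by rewrite (negbTE h1) (negbTE h2).
Qed.

Lemma swapzK i z j : swapz i (swapz i z) j = z j.
Proof.
rewrite /swapz; case: (eqVneq j i) => [->|h1]; first by rewrite eqn_leq ltnn /= eqxx.
case: (eqVneq j i.+1) => [->|h2]; first by rewrite eqxx.
by [].
Qed.

Lemma torus_swap n i z : (i.+1 < n)%N -> torus n z -> torus n (swapz i z).
Proof.
move=> hi tz j hj; rewrite /swapz; case: ifP => _; first exact: tz.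
case: ifP => _; [apply: tz; lia | exact: tz].
Qed.

Lemma sw_lt n i j : (i.+1 < n)%N -> (j < n)%N -> (sw i j < n)%N.
Proof. by rewrite /sw; do ![case: eqP => ?] => /=; lia. Qed.

Lemma sw_inj i j j' : sw i j = sw i j' -> j = j'.
Proof. by rewrite /sw; do ![case: eqP => ?] => /=; lia. Qed.

Lemma sw_ord i j j' : (j < j')%N -> ~~ ((j == i) && (j' == i.+1)) -> (sw i j < sw i j')%N.
Proof. by rewrite /sw; do ![case: eqP => ?] => /=; lia. Qed.

Lemma inZ_swap n k r m i z : (i.+1 < n)%N -> inZ n k r m z ->
  inZ n k r m (swapz i z) \/ z i.+1 = z i * tpar k r.
Proof.
move=> hi [idx [s [h1 h2 h3 h4 h5]]].
case: (boolP [exists l : 'I_m, exists a : 'I_k,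
    [&& idx l a == i, idx l a.+1 == i.+1 & s l a == 0%N]]).
  move=> /existsP [l /existsP [a /and3P [/eqP e1 /eqP e2 /eqP e3]]].
  right; rewrite -e2 h3 // e1 e3 expr0 mulr1 //.
move=> hne; left; exists (fun l a => sw i (idx l a)), s; split => //.
- by move=> l a hl ha; apply: sw_lt => //; exact: h1.
- by move=> l a l' a' hl ha hl' ha' /sw_inj; apply: h2.
- by move=> l a hl ha; rewrite !swapz_sw; exact: h3.
- move=> l a hl ha hs; have := h5 _ _ hl ha hs.
  have : ~~ [&& idx l a == i, idx l a.+1 == i.+1 & s l a == 0%N].
    apply: contra hne => hh; apply/existsP; exists (Ordinal hl); apply/existsP; exists (Ordinal ha); exact: hh.
  rewrite hs eqxx andbT => hh hlt; exact: sw_ord.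
Qed.

Definition cfun k r i (z : Pt) : KK := (t12 k r - (t12 k r)^-1) / (z i / z i.+1 - 1).

Lemma alg1 (F : fieldType) (A x : F) : A != 0 -> 1 - A^+2 != 0 -> x != 0 ->
  A + (A - A^-1)/(x/(x*A^+2) - 1) = 0.
Proof.
move=> A0 h x0.
have -> : x/(x*A^+2) - 1 = (1 - A^+2) / A^+2.
  by rewrite invfM mulrA mulfV // mul1r mulrBl mul1r mulfV // expf_neq0.
rewrite invf_div.
have -> : A - A^-1 = - (1 - A^+2) / A by rewrite mulNr mulrBl mul1r expr2 mulfK // opprB.
rewrite !mulNr.
have -> : (1 - A ^+ 2) / A * (A ^+ 2 / (1 - A ^+ 2)) = A.
  rewrite [X in X * _]mulrC -mulrA [(1 - A ^+ 2) * _]mulrCA mulfV // mulr1.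
  by rewrite expr2 mulKf.
by rewrite subrr.
Qed.

Lemma A_plus_c k r i (z : Pt) : (2 <= r)%N -> z i != 0 -> z i.+1 = z i * tpar k r ->
  t12 k r + cfun k r i z = 0.
Proof.
move=> hr zi e; rewrite /cfun e /tpar.
have A0 := t12_neq0 k r.
have h1 : t12 k r ^+ 2 != 1.
  by have := @tq_ne1 k r 1 0 hr (ltn0Sn 0) (leq0n _); rewrite expr0 mulr1 expr1.
apply: (@alg1 KK (t12 k r) (z i) A0 _ zi); by rewrite subr_eq0 eq_sym.
Qed.

Lemma T_point n k r m i f g z : (2 <= r)%N -> (i.+1 < n)%N ->
  (forall z, torus n z -> inZ n k r m z -> f z = 0) ->
  torus n z -> inZ n k r m z -> z i != z i.+1 ->
  (exists d, g z = (t12 k r + cfun k r i z) * f (swapz i z) + d * f z) -> g z = 0.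
Proof.
move=> hr hi hf tz hz hne [d ->]; rewrite (hf z) // mulr0 addr0.
case: (inZ_swap hi hz) => [hz'|e].
  by rewrite (hf (swapz i z) (torus_swap hi tz) hz') mulr0.
by rewrite A_plus_c ?mul0r //; apply: tz; lia.
Qed.


Lemma wpow_inj a b : w ^+ a = w ^+ b -> a = b.
Proof.
wlog hab : a b / (a <= b)%N.
  move=> H e; case: (leqP a b) => h; first exact: H.
  by symmetry; apply: H; [exact: ltnW | ].
move=> e; have : w ^ (b - a)%N%:Z * tofr 1%:P = 1.
  rewrite tofr1 mulr1; apply: (mulfI (expf_neq0 a w_neq0)).
  by rewrite mulr1 -exprnP -exprD subnKC.
by move/w_pow_const => [] h; lia.
Qed.

Lemma laurent1_zero (s : seq (int * KK)) :
  (forall j : nat, \sum_(p <- s) p.2 * (w ^+ j.+1) ^ p.1 = 0) ->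
  \sum_(p <- s) p.2 = 0.
Proof.
move=> H.
pose N : nat := \sum_(p <- s) `|p.1|%N.
have hN : forall p, p \in s -> (0 <= p.1 + N%:Z).
  move=> p ps; have : (`|p.1| <= N)%N.
    by rewrite /N (big_rem p ps) /= leq_addr.
  move=> h; lia.
pose P : {poly KK} := \sum_(p <- s) p.2%:P * 'X^(absz (p.1 + N%:Z)).
have hP : forall x : KK, x != 0 -> P.[x] = x ^+ N * \sum_(p <- s) p.2 * x ^ p.1.
  move=> x x0; rewrite /P horner_sum big_distrr /=; rewrite big_seq_cond [RHS]big_seq_cond.
  apply: eq_bigr => p /andP [ps _].
  rewrite hornerE hornerXn.
  have -> : x ^+ (absz (p.1 + N%:Z)) = x ^ (p.1 + N%:Z).
    by rewrite exprnP gez0_abs //; exact: hN.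
  by rewrite expfzDr // [RHS]mulrC -mulrA.
have P0 : P = 0.
  apply/eqP; apply/negP => /negP hP0.
  have h1 : all (root P) [seq w ^+ j.+1 | j <- iota 0 (size P)].
    apply/allP => x /mapP [j _ ->]; rewrite /root hP ?H ?mulr0 //.
    by rewrite expf_neq0 // w_neq0.
  have h2 : uniq [seq w ^+ j.+1 | j <- iota 0 (size P)].
    by rewrite map_inj_in_uniq ?iota_uniq // => a b _ _ /wpow_inj [].
  by have := max_poly_roots hP0 h1 h2; rewrite size_map size_iota ltnn.
have := hP 1 (oner_neq0 _); rewrite P0 horner0 expr1n mul1r.
move=> h; rewrite [RHS]h; apply: eq_bigr => p _; by rewrite exp1rz mulr1.
Qed.

Definition zl (S : pred nat) (lam : KK) (z : Pt) : Pt :=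
  fun j => if S j then lam * z j else z j.

Lemma torus_zl n S lam z : lam != 0 -> torus n z -> torus n (zl S lam z).
Proof. by move=> l0 tz j hj; rewrite /zl; case: (S j); rewrite ?mulf_neq0 ?tz. Qed.

Lemma laurent_scale n g S z : laurent n g -> torus n z ->
  exists s' : seq (int * KK), forall lam, lam != 0 ->
    g (zl S lam z) = \sum_(p <- s') p.2 * lam ^ p.1.
Proof.
move=> [s hs] tz.
exists (map (fun p : (nat -> int) * KK => ((\sum_(j < n) (if S (val j) then p.1 (val j) else 0)), p.2 * \prod_(j < n) z (val j) ^ p.1 (val j))) s).
move=> lam l0; rewrite (hs _ (torus_zl S l0 tz)) big_map; apply: eq_bigr => p _ /=.
rewrite -mulrA; congr (_ * _).
rewrite (big_morph (fun c => lam ^ c) (fun a b => expfzDr a b l0) (expr0z lam)).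
rewrite -big_split /=; apply: eq_bigr => j _; rewrite /zl.
by case: (S j); rewrite ?expfzMl ?expr0z ?mulr1 // mulrC.
Qed.

Lemma scale_zero n g S z : laurent n g -> torus n z ->
  (forall j : nat, g (zl S (w ^+ j.+1) z) = 0) -> g z = 0.
Proof.
move=> hg tz H; have [s' hs'] := laurent_scale S hg tz.
have e1 : g z = g (zl S 1 z).
  apply: laurent_ext hg tz (torus_zl _ (oner_neq0 _) tz) _ => j _.
  by rewrite /zl; case: (S j); rewrite ?mul1r.
rewrite e1 hs' ?oner_neq0 //.
rewrite (eq_bigr (fun p => p.2)); last by move=> p _; rewrite exp1rz mulr1.
apply: laurent1_zero => j; rewrite -hs' ?H //.
by rewrite expf_neq0 // w_neq0.
Qed.


Lemma chain_prod (z : Pt) (ix sx : nat -> nat) K (T Q : KK) :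
  (forall a, (a < K)%N -> z (ix a.+1) = z (ix a) * T * Q ^+ sx a) ->
  forall a d, (a + d <= K)%N ->
    z (ix (a + d)%N) = z (ix a) * T ^+ d * Q ^+ (\sum_(a <= c < (a + d)%N) sx c).
Proof.
move=> H a; elim => [|d IH] hd.
  by rewrite addn0 big_geq // !expr0 !mulr1.
rewrite addnS H; last by lia.
rewrite IH; last by lia.
rewrite big_nat_recr /=; last by lia.
by rewrite exprS exprD; ring.
Qed.

Lemma sum_le (sx : nat -> nat) a d K : (a + d <= K)%N ->
  (\sum_(a <= c < (a + d)%N) sx c <= \sum_(c < K) sx c)%N.
Proof.
move=> h; rewrite -(big_mkord xpredT sx) (@big_cat_nat _ _ _ a 0 K) //; last by lia.
rewrite (@big_cat_nat _ _ _ (a + d) a K) /=; [|lia|lia].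
lia.
Qed.

Lemma wpow_ne1 j : w ^+ j.+1 != 1.
Proof. by apply/eqP => h; have := @wpow_inj j.+1 0; rewrite expr0 => /(_ h). Qed.

Lemma Ti_density n k r m i g : (2 <= r)%N -> (i.+1 < n)%N -> laurent n g ->
  (forall z, torus n z -> inZ n k r m z -> z i != z i.+1 -> g z = 0) ->
  forall z, torus n z -> inZ n k r m z -> g z = 0.
Proof.
move=> hr hi hg H z tz hz.
case: (eqVneq (z i) (z i.+1)) => [e|ne]; last exact: H.
have hz' := hz; move: hz' => [idx [s [h1 h2 h3 h4 h5]]].
have [Sb [c [P1 P1' P2]]] : exists (Sb : pred nat) (c : nat -> bool),
    [/\ ~~ Sb i, Sb i.+1 & forall l a, (l < m)%N -> (a <= k)%N -> Sb (idx l a) = c l].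
  case: (boolP [exists l : 'I_m, exists a : 'I_k.+1, idx l a == i.+1]).
    move=> /existsP [l0 /existsP [a0 /eqP e0]].
    exists (fun j => [exists a : 'I_k.+1, idx l0 a == j]), (fun l => l == l0 :> nat).
    split.
    - apply/negP => /existsP [a1 /eqP e1].
      have ne01 : (a0 : nat) != a1.
        by apply/eqP => h; move: e0; rewrite h e1 => /n_Sn.
      have hch : forall a, (a < k)%N -> z (idx l0 a.+1) = z (idx l0 a) * tpar k r * qpar k r ^+ s l0 a.
        by move=> a ha; apply: h3.
      have zi0 : z i != 0 by apply: tz; lia.
      have hsum := h4 _ (ltn_ord l0).
      case: (ltngtP a0 a1) ne01 => // hlt _.
      + have := @chain_prod z (idx l0) (s l0) k (tpar k r) (qpar k r) hch a0 (a1 - a0).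
        rewrite (subnKC (ltnW hlt)) e1 e0 -e => /(_ (ltn_ord a1)) h.
        have : z i * (tpar k r ^+ (a1 - a0) * qpar k r ^+ (\sum_(a0 <= c < a1) s l0 c)) = z i * 1.
          by rewrite mulr1 mulrA -h.
        move/(mulfI zi0)/eqP; apply/negP; apply: tq_ne1 => //; first by lia.
        apply: leq_trans hsum; have := @sum_le (s l0) a0 (a1 - a0) k; rewrite (subnKC (ltnW hlt)); apply; exact: (ltn_ord a1).
      + have := @chain_prod z (idx l0) (s l0) k (tpar k r) (qpar k r) hch a1 (a0 - a1).
        rewrite (subnKC (ltnW hlt)) e1 e0 e => /(_ (ltn_ord a0)) h.
        have zi1 : z i.+1 != 0 by rewrite -e.
        have : z i.+1 * (tpar k r ^+ (a0 - a1) * qpar k r ^+ (\sum_(a1 <= c < a0) s l0 c)) = z i.+1 * 1.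
          by rewrite mulr1 mulrA -h.
        move/(mulfI zi1)/eqP; apply/negP; apply: tq_ne1 => //; first by lia.
        apply: leq_trans hsum; have := @sum_le (s l0) a1 (a0 - a1) k; rewrite (subnKC (ltnW hlt)); apply; exact: (ltn_ord a0).
    - by apply/existsP; exists a0; rewrite e0.
    - move=> l a hl ha; apply/existsP/eqP.
        by move=> [a1 /eqP e1]; have [] := h2 _ _ _ _ (ltn_ord l0) (ltn_ord a1) hl ha e1.
      by move=> ->; exists (Ordinal (ha : (a < k.+1)%N)).
  move=> hne; exists (fun j => j == i.+1), (fun _ => false); split.
  - by apply/eqP => /n_Sn.
  - by [].
  - move=> l a hl ha; apply/negP => /eqP e1; move/negP: hne; apply.
    by apply/existsP; exists (Ordinal hl); apply/existsP; exists (Ordinal (ha : (a < k.+1)%N)); rewrite e1.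
apply: (scale_zero (S := Sb) hg tz) => j.
have l0 : w ^+ j.+1 != 0 by rewrite expf_neq0 // w_neq0.
apply: H; first exact: torus_zl.
  exists idx, s; split => // l a hl ha.
  rewrite /zl P2 // P2 //; last exact: ltnW.
  by case: (c l); rewrite h3 // mulrA mulrA.
rewrite /zl (negbTE P1) P1' -e; apply/eqP => h.
have zi0 : z i != 0 by apply: tz; lia.
move: (wpow_ne1 j); rewrite -[X in X == _](mulfK zi0) -h mulfV //.
by rewrite eqxx.
Qed.

Lemma alg_cc (F : fieldType) (B x : F) : x != 0 -> x != 1 ->
  B / (x^-1 - 1) = - B - B / (x - 1).
Proof.
move=> x0 x1.
have h1 : x - 1 != 0 by rewrite subr_eq0.
have h2 : x^-1 - 1 = - (x - 1) / x by rewrite mulNr mulrBl mulfV // mul1r opprB.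
rewrite h2 invrM ?unitfE ?oppr_eq0 // ?invr_neq0 // invrK invrN.
apply: (mulIf h1); rewrite mulrBl !mulrA mulfVK // mulrN mulNr.
rewrite -mulrA mulVf // mulr1; ring.
Qed.
Lemma alg2 (F : fieldType) (A c c' u v F1 F2 : F) : A != 0 ->
  c' = - (A - A^-1) - c ->
  F1 = A * v + c * (v - u) -> F2 = A * u + c' * (u - v) ->
  u = (A + c) * F2 - (c + (A - A^-1)) * F1.
Proof.
move=> A0 hc -> ->; rewrite hc.
transitivity (u * (A * A^-1)); first by rewrite mulfV // mulr1.
ring.
Qed.

Lemma T_fwd n k r m i f g : (2 <= r)%N -> (i.+1 < n)%N -> Iid n k r m f -> laurent n g ->
  Tspec n k r i f g -> Iid n k r m g.
Proof.
move=> hr hi [hf hfz] hg hT; split => //.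
apply: (Ti_density hr hi hg) => z tz hz ne.
apply: (T_point hr hi hfz tz hz ne); exists (- cfun k r i z).
rewrite (hT z tz ne) /cfun; ring.
Qed.

Lemma swapz_i i z : swapz i z i = z i.+1.
Proof. by rewrite /swapz eqxx. Qed.
Lemma swapz_i1 i z : swapz i z i.+1 = z i.
Proof. by rewrite /swapz eqn_leq ltnn /= eqxx. Qed.

Lemma T_inv n k r m i f g : (2 <= r)%N -> (i.+1 < n)%N -> Iid n k r m f -> laurent n g ->
  Tspec n k r i g f -> Iid n k r m g.
Proof.
move=> hr hi [hf hfz] hg hT; split => //.
apply: (Ti_density hr hi hg) => z tz hz ne.
apply: (T_point hr hi hfz tz hz ne); exists (- (cfun k r i z + (t12 k r - (t12 k r)^-1))).
have tz' := torus_swap hi tz.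
have ne' : swapz i z i != swapz i z i.+1 by rewrite swapz_i swapz_i1 eq_sym.
have e2 := hT _ tz' ne'.
have e1 := hT _ tz ne.
have egg : g (swapz i (swapz i z)) = g z.
  apply: laurent_ext hg (torus_swap hi tz') tz _ => j _; exact: swapzK.
rewrite egg in e2.
have zi0 : z i != 0 by apply: tz; lia.
have zi1 : z i.+1 != 0 by apply: tz; lia.
have x0 : z i / z i.+1 != 0 := mulf_neq0 zi0 (invr_neq0 zi1).
have x1 : z i / z i.+1 != 1.
  apply: contra ne => /eqP h; apply/eqP; by rewrite -[z i](mulfVK zi1) h mul1r.
rewrite mulNr.
apply: (@alg2 KK (t12 k r) (cfun k r i z) (cfun k r i (swapz i z)) (g z) (g (swapz i z)) (f z) (f (swapz i z)) (t12_neq0 k r)).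
- rewrite /cfun swapz_i swapz_i1 -[z i.+1 / z i]invf_div.
  exact: (@alg_cc KK (t12 k r - (t12 k r)^-1) (z i / z i.+1) x0 x1).
- rewrite e1 /cfun; reflexivity.
- rewrite e2 /cfun; reflexivity.
Qed.


Definition shift n j : nat := if j == n.-1 then 0%N else j.+1.

Lemma omz_shift n k r z j : (j < n)%N ->
  omz n k r z (shift n j) = if j == n.-1 then qpar k r * z j else z j.
Proof.
move=> hj; rewrite /omz /shift; case: (eqVneq j n.-1) => [->|h] /=; by rewrite ?eqxx.
Qed.

Lemma shift_lt n j : (j < n)%N -> (shift n j < n)%N.
Proof. rewrite /shift; case: eqP; lia. Qed.

Lemma shift_inj n j j' : (j < n)%N -> (j' < n)%N -> shift n j = shift n j' -> j = j'.
Proof. rewrite /shift; do 2 case: eqP; lia. Qed.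

Lemma torus_omz n k r z : (2 <= r)%N -> (0 < n)%N -> torus n z -> torus n (omz n k r z).
Proof.
move=> hr hn tz j hj; rewrite /omz; case: (j == 0%N).
  apply: mulf_neq0; [exact: qpar_neq0 | apply: tz; lia].
by apply: tz; lia.
Qed.

Lemma sum_recl K (F : nat -> nat) : (0 < K)%N ->
  (\sum_(a < K) F a = F 0 + \sum_(a < K.-1) F a.+1)%N.
Proof. by case: K => // K _; rewrite big_ord_recl. Qed.

Lemma sum_recr K (F : nat -> nat) : (0 < K)%N ->
  (\sum_(a < K) F a = \sum_(a < K.-1) F a + F K.-1)%N.
Proof. by case: K => // K _; rewrite big_ord_recr. Qed.

Lemma inZ_omz n k r m z : (1 <= k)%N -> (2 <= r)%N -> torus n z ->
  inZ n k r m z -> inZ n k r m (omz n k r z).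
Proof.
move=> hk hr tz [idx [s [h1 h2 h3 h4 h5]]].
pose N := n.-1.
pose R l := idx l k == N.
pose rot l a := if R l then (if a == 0%N then k else a.-1) else a.
pose dl j : nat := (j == N).
pose s' l a := if R l then (if a == 0%N then (r - 2 - \sum_(c < k) s l c)%N else s l a.-1)
               else (s l a + dl (idx l a.+1) - dl (idx l a))%N.
have hn : forall l a, (l < m)%N -> (a <= k)%N -> (idx l a < N.+1)%N.
  move=> l a hl ha; have := h1 _ _ hl ha; rewrite /N; lia.
have hrot : forall l a, (a <= k)%N -> (rot l a <= k)%N.
  by move=> l a ha; rewrite /rot; case: (R l) => //; case: eqP => _ //; lia.
have hNk : forall l a, (l < m)%N -> (a < k)%N -> R l -> idx l a != N.
  move=> l a hl ha /eqP hR; apply/eqP => e.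
  have [_ ] := h2 _ _ _ _ hl (ltnW ha) hl (leqnn k) (etrans e (esym hR)); lia.
have hsN : forall l a, (l < m)%N -> (a < k)%N -> idx l a = N -> (0 < s l a)%N.
  move=> l a hl ha e; case: (posnP (s l a)) => // h0.
  have := h5 _ _ hl ha h0; have := hn _ _ hl ha; rewrite e; lia.
have hinj : forall l a a', (l < m)%N -> (a <= k)%N -> (a' <= k)%N -> idx l a = idx l a' -> a = a'.
  by move=> l a a' hl ha ha' e; have [] := h2 _ _ _ _ hl ha hl ha' e.
exists (fun l a => shift n (idx l (rot l a))), s'; split.
- move=> l a hl ha; apply: shift_lt; apply: h1 => //; exact: hrot.
- move=> l a l' a' hl ha hl' ha' e.
  have e' := shift_inj (h1 _ _ hl (hrot l a ha)) (h1 _ _ hl' (hrot l' a' ha')) e.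
  have [el ea] := h2 _ _ _ _ hl (hrot l a ha) hl' (hrot l' a' ha') e'.
  subst l'; split => //; move: ea; rewrite /rot; case: (R l) => //.
  by case: eqP; case: eqP; lia.
- move=> l a hl ha; rewrite /rot /s'; case hR: (R l).
  + case: (eqVneq a 0%N) => [->|a0] /=.
    * have hk0 := hNk _ _ hl hk hR.
      rewrite !omz_shift ?(h1 _ _ hl) // (negbTE hk0).
      move: (hR) => /eqP ->; rewrite eqxx.
      have hch : forall a, (a < k)%N -> z (idx l a.+1) = z (idx l a) * tpar k r * qpar k r ^+ s l a.
        by move=> b hb; apply: h3.
      have := @chain_prod z (idx l) (s l) k (tpar k r) (qpar k r) hch 0 k.
      rewrite add0n big_mkord => /(_ (leqnn k)).
      move: (hR) => /eqP -> ->.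
      set S := \sum_(c < k) s l c.
      have hS : (S <= r - 2)%N := h4 _ hl.
      have e : (r.-1 = 1 + S + (r - 2 - S))%N by lia.
      rewrite -[LHS]mulr1 -(tq_rel k hr) e !exprD exprS expr1; ring.
    * have ha1 : (a.-1 < k)%N by lia.
      rewrite !omz_shift ?(h1 _ _ hl) ?(ltnW ha) ?(ltnW ha1) //.
      rewrite (negbTE (hNk _ _ hl ha hR)) (negbTE (hNk _ _ hl ha1 hR)).
      by have := h3 _ _ hl ha1; rewrite prednK ?lt0n.
  + rewrite !omz_shift ?(h1 _ _ hl) ?(ltnW ha) // /dl.
    have e3 := h3 _ _ hl ha.
    case: (eqVneq (idx l a) N) => e0; case: (eqVneq (idx l a.+1) N) => e1 /=.
    * by have := hinj _ _ _ hl (ltnW ha) ha (etrans e0 (esym e1)); lia.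
    * have hs0 := hsN _ _ hl ha e0.
      rewrite e3 addn0 subn1; case: (s l a) hs0 => // b _ /=; rewrite exprS; ring.
    * by rewrite e3 addn1 subn0 exprS; ring.
    * by rewrite e3 !addn0 subn0.
- move=> l hl; case hR: (R l).
  + rewrite (sum_recl (s' l) hk) {1}/s' hR /=.
    have -> : (\sum_(a < k.-1) s' l a.+1 = \sum_(a < k.-1) s l a)%N.
      by apply: eq_bigr => a _; rewrite /s' hR.
    have hS := h4 _ hl; move: hS.
    rewrite (sum_recr (s l) hk) => hS.
    lia.
  + have t1 : forall a : 'I_k, (s' l a + dl (idx l a) = s l a + dl (idx l a.+1))%N.
      move=> a; rewrite /s' hR /dl.
      case: (eqVneq (idx l a) N) => e0 /=; last by lia.
      have := hsN _ _ hl (ltn_ord a) e0; lia.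
    have t2 : (\sum_(a < k) s' l a + \sum_(a < k) dl (idx l a)
              = \sum_(a < k) s l a + \sum_(a < k) dl (idx l a.+1))%N.
      by rewrite -!big_split /=; apply: eq_bigr => a _; exact: t1.
    have t3 : (\sum_(a < k.+1) dl (idx l a) = dl (idx l 0) + \sum_(a < k) dl (idx l a.+1))%N.
      by rewrite big_ord_recl.
    have t4 : (\sum_(a < k.+1) dl (idx l a) = \sum_(a < k) dl (idx l a) + dl (idx l k))%N.
      by rewrite big_ord_recr.
    have t5 : dl (idx l k) = 0%N by rewrite /dl -/(R l) hR.
    have := h4 _ hl; lia.
- move=> l a hl ha; rewrite /rot /s' /shift; case hR: (R l).
  + move: (hR) => /eqP hRe.
    case: (eqVneq a 0%N) => [->|a0] /=.
      by rewrite hRe eqxx (negbTE (hNk _ _ hl hk hR)).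
    have ha1 : (a.-1 < k)%N by lia.
    rewrite (negbTE (hNk _ _ hl ha hR)) (negbTE (hNk _ _ hl ha1 hR)) => hs.
    have := h5 _ _ hl ha1 hs; rewrite prednK ?lt0n //.
  + rewrite /dl.
    case: (eqVneq (idx l a) N) => e0; case: (eqVneq (idx l a.+1) N) => e1 /=.
    * by have := hinj _ _ _ hl (ltnW ha) ha (etrans e0 (esym e1)); lia.
    * by [].
    * lia.
    * rewrite !subn0 !addn0 => hs; have := h5 _ _ hl ha hs; lia.
Qed.


Lemma omz_iter n k r z m j : (m <= n)%N -> (j < n)%N ->
  iter m (omz n k r) z j = if (m <= j)%N then z (j - m)%N else qpar k r * z (n - m + j)%N.
Proof.
elim: m j => [|m IH] j hm hj /=; first by rewrite subn0.
rewrite {1}/omz; case: (eqVneq j 0%N) => [->|j0].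
  rewrite IH; [|lia|lia].
  have -> : (m <= n.-1)%N by lia.
  by congr (_ * z _); lia.
rewrite IH; [|lia|lia].
case: (leqP m j.-1) => h1; case: (leqP m.+1 j) => h2; try lia.
  by congr (z _); lia.
by congr (_ * z _); lia.
Qed.

Definition scz (c : KK) (z : Pt) : Pt := fun j => c * z j.

Lemma inZ_scz n k r m c z : inZ n k r m z -> inZ n k r m (scz c z).
Proof.
move=> [idx [s [h1 h2 h3 h4 h5]]]; exists idx, s; split => // l a hl ha.
by rewrite /scz h3 // !mulrA.
Qed.

Lemma omz_inv n k r m z : (1 <= k)%N -> (2 <= r)%N -> (0 < n)%N -> torus n z -> inZ n k r m z ->
  exists z'', [/\ torus n z'', inZ n k r m z'' & forall j, (j < n)%N -> omz n k r z'' j = z j].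
Proof.
move=> hk hr hn tz hz.
have q0 := qpar_neq0 k hr.
have tz0 : torus n (scz (qpar k r)^-1 z).
  move=> j hj; rewrite /scz; apply: mulf_neq0; [exact: (invr_neq0 q0) | exact: tz].
have hz0 := inZ_scz (qpar k r)^-1 hz.
exists (iter n.-1 (omz n k r) (scz (qpar k r)^-1 z)); split.
- elim: n.-1 => [|p IH]; [exact: tz0 | exact: torus_omz].
- have ht : forall p, torus n (iter p (omz n k r) (scz (qpar k r)^-1 z)).
    by elim => [|p IH]; [exact: tz0 | exact: torus_omz].
  elim: n.-1 => [|p IH]; [exact: hz0 | exact: (inZ_omz hk hr (ht p) IH)].
- move=> j hj; rewrite -iterS prednK // omz_iter // leqNgt hj /= /scz.
  by rewrite subnn add0n mulrA (mulfV q0) mul1r.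
Qed.

Lemma Omega_fwd n k r m f : (1 <= k)%N -> (2 <= r)%N -> (0 < n)%N ->
  Iid n k r m f -> laurent n (Omega n k r f) -> Iid n k r m (Omega n k r f).
Proof.
move=> hk hr hn [hf hfz] hl; split => // z tz hz.
by rewrite /Omega; apply: hfz; [exact: torus_omz | exact: inZ_omz].
Qed.

Lemma Omega_inv n k r m h : (1 <= k)%N -> (2 <= r)%N -> (0 < n)%N ->
  laurent n h -> Iid n k r m (Omega n k r h) -> Iid n k r m h.
Proof.
move=> hk hr hn hl [_ hz0]; split => // z tz hz.
have [z'' [t'' i'' e'']] := omz_inv hk hr hn tz hz.
rewrite -(laurent_ext hl (torus_omz k hr hn t'') tz e'').
exact: hz0.
Qed.


Theorem theorem6p1 (n k r : nat) :
  (1 <= k)%N -> (k <= n.-1)%N -> (2 <= r)%N ->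
  (forall m : nat, (1 <= m)%N ->
     [/\ forall i f, (i < n)%N -> Iid n k r m f -> Iid n k r m (Xop i f),
         forall i f, (i < n)%N -> Iid n k r m f -> Iid n k r m (Xinv i f),
         forall i f g, (i.+1 < n)%N -> Iid n k r m f -> laurent n g ->
           Tspec n k r i f g -> Iid n k r m g
       & forall i f g, (i.+1 < n)%N -> Iid n k r m f -> laurent n g ->
           Tspec n k r i g f -> Iid n k r m g]
     /\
     [/\ forall i f g, (i < n)%N -> Iid n k r m f ->
           Yspec n k r i f g -> Iid n k r m g
       & forall i f g, (i < n)%N -> Iid n k r m f -> laurent n g ->
           Yspec n k r i g f -> Iid n k r m g])
  /\ (forall m f, (1 <= m)%N -> Iid n k r m f -> Iid n k r m.+1 f)
  /\ (forall f, laurent n f -> Iid n k r (n %/ k.+1).+1 f).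
Proof.
move=> hk hkn hr.
have hn : (0 < n)%N by lia.
split; [|split].
- move=> m hm; split; split.
  + move=> i f hi hf; exact: Iid_Xop.
  + move=> i f hi hf; exact: Iid_Xinv.
  + move=> i f g hi hf hg hT; exact: (T_fwd hr hi hf hg hT).
  + move=> i f g hi hf hg hT; exact: (T_inv hr hi hf hg hT).
  + move=> i f g hi hf [h [h' [[h0 hl hT] [h'0 hl' hT' ->]]]].
    have Hh : forall j, (j <= i)%N -> Iid n k r m (h j).
      elim => [|j IH] hj; first by rewrite h0.
      have hij : ((i.-1 - j).+1 < n)%N by lia.
      exact: (T_inv hr hij (IH (ltnW hj)) (hl _ hj) (hT _ hj)).
    have Ho : Iid n k r m (h' 0%N).
      by rewrite h'0; apply: Omega_fwd => //; [exact: Hh | rewrite -h'0; exact: hl'].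
    have Hh' : forall j, (j <= n.-1 - i)%N -> Iid n k r m (h' j).
      elim => [|j IH] hj; first exact: Ho.
      have hij : ((n.-2 - j).+1 < n)%N by lia.
      exact: (T_fwd hr hij (IH (ltnW hj)) (hl' _ hj) (hT' _ hj)).
    exact: Hh'.
  + move=> i f g hi hf hg [h [h' [[h0 hl hT] [h'0 hl' hT' hfe]]]].
    have Hh' : forall d, (d <= n.-1 - i)%N -> Iid n k r m (h' (n.-1 - i - d)%N).
      elim => [|d IH] hd; first by rewrite subn0 -hfe.
      have hj : (n.-1 - i - d.+1 < n.-1 - i)%N by lia.
      have e : (n.-1 - i - d = (n.-1 - i - d.+1).+1)%N by lia.
      have hij : ((n.-2 - (n.-1 - i - d.+1)).+1 < n)%N by lia.
      have := IH (ltnW hd); rewrite e => hI.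
      exact: (T_inv hr hij hI (hl' _ (ltnW hj)) (hT' _ hj)).
    have Ho : Iid n k r m (h' 0%N).
      by have := Hh' (n.-1 - i)%N (leqnn _); rewrite subnn.
    have Hi : Iid n k r m (h i).
      apply: (Omega_inv hk hr hn (hl _ (leqnn i))); by rewrite -h'0.
    have Hh : forall d, (d <= i)%N -> Iid n k r m (h (i - d)%N).
      elim => [|d IH] hd; first by rewrite subn0.
      have hj : (i - d.+1 < i)%N by lia.
      have e : (i - d = (i - d.+1).+1)%N by lia.
      have hij : ((i.-1 - (i - d.+1)).+1 < n)%N by lia.
      have := IH (ltnW hd); rewrite e => hI.
      exact: (T_fwd hr hij hI (hl _ (ltnW hj)) (hT _ hj)).
    by have := Hh i (leqnn i); rewrite subnn h0.
- move=> m f hm [hl hz]; split => // z tz hZ; apply: hz => //; exact: inZ_mono.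
- move=> f hl; split => // z tz hZ; exfalso; exact: inZ_empty hZ.
Qed.
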